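(* Let $R$ be a commutative ring which is free as an abelian group with $\mathbb{Z}$-basis $V$, let $p$ be a prime, $n\ge2$ and $r\ge1$. Then there is a group epimorphism $\varphi_r:\Gamma(SL_n(R),p^r)\to\mathfrak{sl}_n(\mathbb{F}_p[V])$ (target regarded as an additive group) whose kernel is $\Gamma(SL_n(R),p^{r+1})$. Consequently $\Gamma(SL_n(R),p^r)/\Gamma(SL_n(R),p^{r+1})\cong\mathfrak{sl}_n(\mathbb{F}_p[V])$ as groups.
   Context: $\Gamma(SL_n(R),p^m)=\ker\big(SL_n(R)\to SL_n(R\otimes_{\mathbb{Z}}\mathbb{Z}/p^m)\big)$. $\mathbb{F}_p[V]=R\otimes_{\mathbb{Z}}\mathbb{Z}/p=R/pR$, and $\mathfrak{sl}_n(\mathbb{F}_p[V])$ is the set of traceless $n\times n$ matrices over $R/pR$. *)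

(* Defs.v *)
From HB Require Import structures.
From mathcomp Require Import all_boot all_order all_algebra.
From mathcomp Require Import generic_quotient ring_quotient.
From mathcomp Require Import boolp.
Set Implicit Arguments. Unset Strict Implicit. Unset Printing Implicit Defensive.
Import GRing.Theory.
Local Open Scope ring_scope.
Local Open Scope quotient_scope.

Definition Zbasis (R : pzRingType) (V : eqType) (b : V -> R) : Prop :=
  (forall x : R, exists (s : seq V) (c : V -> int),
      x = \sum_(v <- s) b v *~ c v) /\
  (forall (s : seq V) (c : V -> int), uniq s ->
      \sum_(v <- s) b v *~ c v = 0 -> forall v, v \in s -> c v = 0).

Definition pmult (R : comPzRingType) (p : nat) : {pred R} :=
  fun x => `[< exists c : R, x = p%:R * c >].

Lemma pmult_zmod_closed (R : comPzRingType) (p : nat) :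
  GRing.zmod_closed (@pmult R p).
Proof.
split.
  by apply/asboolP; exists 0; rewrite mulr0.
move=> x y /asboolP [c ->] /asboolP [d ->].
by apply/asboolP; exists (c - d); rewrite mulrBr.
Qed.

HB.instance Definition _ (R : comPzRingType) (p : nat) :=
  GRing.isZmodClosed.Build R (@pmult R p) (@pmult_zmod_closed R p).

Export Quotient.

(* F_p[V] = R / pR, as an additive group (quotient Z-module). *)
Definition Fp_of (R : comPzRingType) (p : nat) := @Quotient.quot R (@pmult R p).

Definition redp (R : comPzRingType) (p : nat) (x : R) : Fp_of R p :=
  \pi_(Fp_of R p) x.

Definition is_sl (R : comPzRingType) (p n : nat) (X : 'M[Fp_of R p]_n) : Prop :=
  \sum_(i < n) X i i = 0.

Definition Gamma (R : comPzRingType) (p n m : nat) (A : 'M[R]_n) : Prop :=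
  \det A = 1 /\
  forall i j : 'I_n, exists c : R, (A - 1%:M) i j = (p ^ m)%:R * c.

(* Main.v *)
Require Import Defs.
From HB Require Import structures.
From mathcomp Require Import all_boot all_order all_algebra.
From mathcomp Require Import generic_quotient ring_quotient boolp.
From mathcomp Require Import ring fingroup perm.
Set Implicit Arguments. Unset Strict Implicit. Unset Printing Implicit Defensive.
Import GRing.Theory.
Local Open Scope ring_scope.
Local Open Scope quotient_scope.

Section S.
Variables (R : comPzRingType) (V : eqType) (b : V -> R).
Lemma uniq_rep (s : seq V) (c : V -> int) : exists (s' : seq V) (c' : V -> int),
  uniq s' /\ \sum_(v <- s) b v *~ c v = \sum_(v <- s') b v *~ c' v.
Proof.
elim: s => [|v s [s' [c' [us' e]]]]; first by exists [::], c; rewrite !big_nil.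
rewrite big_cons e.
case: (boolP (v \in s')) => vs.
  exists s', (fun w => if w == v then c' v + c v else c' w); split => //.
  rewrite (bigD1_seq v) //= [in RHS](bigD1_seq v) //= eqxx mulrzDr.
  rewrite addrA [b v *~ c v + _]addrC; congr (_ + _).
  by apply: eq_bigr => w /negbTE ->.
exists (v :: s'), (fun w => if w == v then c v else c' w); split; first by rewrite /= vs.
rewrite big_cons eqxx; congr (_ + _).
apply: eq_big_seq => w ws.
by case: eqP => // ew; rewrite -ew ws in vs.
Qed.

Lemma torsion_free (hb : Zbasis b) (m : nat) (x : R) : (0 < m)%N -> m%:R * x = 0 -> x = 0.
Proof.
move=> m0 hx; case: hb => [hsp hind].
have [s [c ex]] := hsp x.
have [s' [c' [us e]]] := uniq_rep s c. rewrite e in ex *.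
have h : \sum_(v <- s') b v *~ (c' v * m%:Z) = 0.
  rewrite -[RHS]hx ex big_distrr /=; apply: eq_bigr => v _.
  by rewrite mulrzA -pmulrn mulr_natl.
have := hind s' (fun v => c' v * m%:Z) us h => hz.
rewrite ex big_seq; apply: big1 => v vs.
have := hz v vs => /eqP; rewrite mulf_eq0 => /orP [/eqP -> |]; first by rewrite mulr0z.
by move=> /eqP [m0']; rewrite m0' in m0.
Qed.
End S.

Section S4.
Set Implicit Arguments.
Variables (R : comPzRingType).
Definition dv (a x : R) := exists c, x = a * c.
Lemma dv0 a : dv a 0. Proof. by exists 0; rewrite mulr0. Qed.
Lemma dvD a x y : dv a x -> dv a y -> dv a (x + y).
Proof. by move=> [c ->] [d ->]; exists (c + d); rewrite mulrDr. Qed.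
Lemma dvMr a x y : dv a x -> dv a (y * x).
Proof. by move=> [c ->]; exists (y * c); rewrite mulrCA. Qed.

Lemma det_expand n (t : R) (X : 'M[R]_n) :
  dv (t ^+ 2) (\det (1%:M + t *: X) - (1 + t * \tr X)).
Proof.
rewrite /determinant (bigD1 (1%g : 'S_n)) //= odd_perm1 expr0 mul1r.
have h1 : dv (t ^+ 2) (\prod_i (1%:M + t *: X : 'M[R]_n) i ((1 : 'S_n)%g i) - (1 + t * \tr X)).
  rewrite /mxtrace.
  apply: (big_rec2 (fun y1 y2 => dv (t^+2) (y1 - (1 + t * y2)))).
    by exists 0; rewrite mulr0 mulr0 addr0 subrr.
  move=> i y1 y2 _ [c hc].
  exists (X i i * y2 + c + t * X i i * c).
  rewrite !mxE perm1 eqxx /=.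
  have -> : y1 = 1 + t * y2 + t ^+ 2 * c by rewrite -hc; ring.
  ring.
suff h2 : dv (t ^+ 2) (\sum_(s : 'S_n | s != 1%g) (-1) ^+ s * \prod_i (1%:M + t *: X : 'M[R]_n) i (s i)).
  have [c hc] := dvD h1 h2; exists c; rewrite -hc; ring.
apply: big_ind => //; [exact: dv0| exact: dvD|].
move=> s s1; apply: dvMr.
have [i si] : exists i, s i != i.
  apply/existsP; apply: contraR s1 => /existsPn h; apply/eqP/permP => i.
  by rewrite perm1; apply/eqP; move: (h i); rewrite negbK.
have sj : s (s i) != s i by apply: contra si => /eqP /perm_inj ->.
rewrite (bigD1 i) //= (bigD1 (s i)) ?si //=.
have e1 : (1%:M + t *: X : 'M[R]_n) i (s i) = t * X i (s i).
  by rewrite !mxE eq_sym (negbTE si) /= add0r.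
have e2 : (1%:M + t *: X : 'M[R]_n) (s i) (s (s i)) = t * X (s i) (s (s i)).
  by rewrite !mxE eq_sym (negbTE sj) /= add0r.
rewrite e1 e2.
move: (\prod_(_ < _ | _) _) => P.
by exists (X i (s i) * (X (s i) (s (s i)) * P)); ring.
Qed.
End S4.

Section Main.
Variables (R : comPzRingType) (V : eqType) (b : V -> R) (hb : Zbasis b)
  (p r : nat) (hp : prime p) (hr : (1 <= r)%N).

Local Notation rp := (@redp R p).
Definition redM n (Z : 'M[R]_n) : 'M[Fp_of R p]_n := map_mx (rp) Z.

Lemma redpD (x y : R) : rp (x + y) = rp x + rp y.
Proof. by rewrite /redp raddfD. Qed.
Lemma redpN (x : R) : rp (- x) = - rp x.
Proof. by rewrite /redp raddfN. Qed.
Lemma redp0 : rp 0 = 0.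
Proof. by rewrite /redp raddf0. Qed.
Lemma redp0E (x : R) : (rp x = 0) <-> x \in @pmult R p.
Proof.
rewrite /redp. have := idealrBE (@pmult R p) x 0. rewrite subr0 => ->.
rewrite -(raddf0 (\pi_(Fp_of R p))). split; [by move=> ->|by move/eqP].
Qed.
Lemma redp_sum n (F : 'I_n -> R) : rp (\sum_i F i) = \sum_i rp (F i).
Proof. by rewrite /redp raddf_sum. Qed.

Lemma redMD n (A B : 'M[R]_n) : redM (A + B) = redM A + redM B.
Proof. by apply/matrixP => i j; rewrite !mxE redpD. Qed.
Lemma redM0 n : redM (0 : 'M[R]_n) = 0.
Proof. by apply/matrixP => i j; rewrite !mxE redp0. Qed.

Definition t : R := (p ^ r)%:R.

Lemma p_gt0 : (0 < p)%N. Proof. exact: prime_gt0. Qed.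
Lemma t_gt0 : (0 < p ^ r)%N. Proof. by rewrite expn_gt0 p_gt0. Qed.

Lemma tcancel (x y : R) : t * x = t * y -> x = y.
Proof.
move=> h; apply/eqP; rewrite -subr_eq0; apply/eqP.
by apply: (torsion_free hb t_gt0); rewrite mulrBr h subrr.
Qed.

Lemma t_pmult (x : R) : t * x \in @pmult R p.
Proof.
apply/asboolP; exists ((p ^ r.-1)%:R * x).
by rewrite /t mulrA -natrM -expnS prednK.
Qed.

Definition w (x : R) : R :=
  if pselect (exists c, x = t * c) is left h then projT1 (cid h) else 0.

Lemma wE x c : x = t * c -> w x = c.
Proof.
move=> e; rewrite /w; case: pselect => [h|[]]; last by exists c.
case: (cid h) => /= d hd; apply: tcancel; by rewrite -hd.
Qed.

Definition phi n (A : 'M[R]_n) : 'M[Fp_of R p]_n :=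
  \matrix_(i, j) rp (w ((A - 1%:M) i j)).

Lemma phiE n (A Z : 'M[R]_n) : A = 1%:M + t *: Z -> phi A = redM Z.
Proof.
move=> ->; apply/matrixP => i j; rewrite !mxE.
congr (rp _); apply: wE.
by rewrite addrC addKr.
Qed.

Definition Xof n (A : 'M[R]_n) : 'M[R]_n := \matrix_(i, j) w ((A - 1%:M) i j).

Lemma GammaE n (A : 'M[R]_n) : Gamma p r A -> A = 1%:M + t *: Xof A.
Proof.
move=> [_ h]; apply/matrixP => i j.
have [c hc] := h i j.
move: hc; rewrite !mxE => hc; rewrite (wE hc) /t -hc addrC subrK //.
Qed.


Lemma Gamma_of n (Z : 'M[R]_n) : \det (1%:M + t *: Z) = 1 -> Gamma p r (1%:M + t *: Z).
Proof.
move=> hd; split => // i j; exists (Z i j).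
by rewrite addrC addKr mxE.
Qed.

Lemma phi_sl n (A : 'M[R]_n) : Gamma p r A -> is_sl (phi A).
Proof.
move=> hA; have e := GammaE hA; rewrite (phiE e) /is_sl.
have [c hc] := det_expand t (Xof A).
rewrite -e (proj1 hA) in hc.
have htr : \tr (Xof A) = t * (- c).
  apply: tcancel; rewrite mulrA -expr2 mulrN -hc; ring.
under eq_bigr do rewrite mxE.
rewrite -redp_sum; apply/redp0E.
by rewrite -/(mxtrace (Xof A)) htr t_pmult.
Qed.

Lemma mulE n (X Y : 'M[R]_n) :
  (1%:M + t *: X) *m (1%:M + t *: Y) = 1%:M + t *: (X + Y + t *: (X *m Y)).
Proof.
rewrite mulmxDl !mulmxDr !mul1mx !mulmx1 -!scalemxAl -!scalemxAr !scalerA !scalerDr.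
by rewrite scalerA -!addrA; congr (_ + _); rewrite addrCA.
Qed.

Lemma redM_t n (Z : 'M[R]_n) : redM (t *: Z) = 0.
Proof. by apply/matrixP => i j; rewrite !mxE; apply/redp0E; apply: t_pmult. Qed.

Lemma phiM n (A B : 'M[R]_n) : Gamma p r A -> Gamma p r B ->
  phi (A *m B) = phi A + phi B.
Proof.
move=> hA hB; have eA := GammaE hA; have eB := GammaE hB.
move: (Xof A) (Xof B) eA eB => X Y -> ->.
by rewrite mulE !(phiE (erefl _)) !redMD redM_t addr0.
Qed.

Lemma GammaM n (A B : 'M[R]_n) : Gamma p r A -> Gamma p r B -> Gamma p r (A *m B).
Proof.
move=> hA hB; have eA := GammaE hA; have eB := GammaE hB.
have dA := proj1 hA; have dB := proj1 hB.
move: (Xof A) (Xof B) eA eB => X Y eA eB.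
rewrite eA eB mulE; apply: Gamma_of; by rewrite -mulE -eA -eB det_mulmx dA dB mulr1.
Qed.

Lemma subE n (A X : 'M[R]_n) : A = 1%:M + t *: X -> A - 1%:M = t *: X.
Proof. by move=> ->; rewrite addrC addKr. Qed.

Lemma phi_ker n (A : 'M[R]_n) : Gamma p r A -> (phi A = 0 <-> Gamma p r.+1 A).
Proof.
move=> hA; have eA := GammaE hA; move: (Xof A) eA => X eA.
rewrite (phiE eA); split.
  move=> h; split; first exact: (proj1 hA).
  move=> i j; move/matrixP: h => h; have hh := h i j; rewrite !mxE in hh.
  move/redp0E/asboolP: hh => [c hc].
  exists c; rewrite (subE eA) mxE hc.
  by rewrite /t expnSr natrM mulrA.
move=> [_ h]; apply/matrixP => i j; rewrite !mxE; apply/redp0E; apply/asboolP.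
have [c hc] := h i j; exists c; apply: tcancel.
move: hc; rewrite (subE eA) mxE => ->.
by rewrite /t expnSr natrM mulrA.
Qed.


Definition S n (Z : 'M[R]_n) := exists2 A, Gamma p r A & phi A = redM Z.

Lemma S_add n (Z1 Z2 : 'M[R]_n) : S Z1 -> S Z2 -> S (Z1 + Z2).
Proof.
move=> [A hA eA] [B hB eB]; exists (A *m B); first exact: GammaM.
by rewrite phiM // eA eB redMD.
Qed.

Lemma S_zero n (Z : 'M[R]_n) : redM Z = 0 -> S Z.
Proof.
move=> hz; exists 1%:M.
  have -> : (1%:M : 'M[R]_n) = 1%:M + t *: 0 by rewrite scaler0 addr0.
  by apply: Gamma_of; rewrite scaler0 addr0 det1.
by rewrite hz (phiE (Z := 0)) ?redM0 // scaler0 addr0.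
Qed.

Lemma trig_one n (M : 'M[R]_n) : (forall k l : 'I_n, (k < l)%N -> M k l = 0) ->
  (forall k, M k k = 1) -> \det M = 1.
Proof.
move=> h1 h2; rewrite det_trig; last by apply/is_trig_mxP.
by apply: big1 => k _.
Qed.

Lemma det_elem n (i j : 'I_n) (s : R) : i != j -> \det (1%:M + s *: delta_mx i j) = 1.
Proof.
move=> ij.
have hd : forall k, (1%:M + s *: delta_mx i j : 'M[R]_n) k k = 1.
  move=> k; rewrite !mxE eqxx /=.
  have -> : (k == i) && (k == j) = false.
    by apply/andP => [[/eqP -> /eqP e]]; rewrite e eqxx in ij.
  by rewrite mulr0 addr0.
case: (ltngtP i j) => [lt|gt|eq]; last first.
- by move: ij; rewrite (val_inj eq) eqxx.
- apply: trig_one => // k l kl; rewrite !mxE.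
  have -> : (k == l) = false by apply: contraTF kl => /eqP ->; rewrite ltnn.
  case: (eqVneq k i) => [ki|]; last by rewrite /= mulr0 addr0.
  case: (eqVneq l j) => [lj|]; last by rewrite /= mulr0 addr0.
  by move: kl; rewrite ki lj ltnNge (ltnW gt).
- rewrite -det_tr; apply: trig_one => [k l kl|k]; last by rewrite mxE hd.
  rewrite !mxE.
  have -> : (l == k) = false by apply: contraTF kl => /eqP ->; rewrite ltnn.
  case: (eqVneq l i) => [li|]; last by rewrite /= mulr0 addr0.
  case: (eqVneq k j) => [kj|]; last by rewrite /= mulr0 addr0.
  by move: kl; rewrite li kj ltnNge (ltnW lt).
Qed.

Lemma S_elem n (i j : 'I_n) (a : R) : i != j -> S (a *: delta_mx i j).
Proof.
move=> ij; exists (1%:M + t *: (a *: delta_mx i j)).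
  by apply: Gamma_of; rewrite scalerA det_elem.
exact: phiE.
Qed.


Ltac simp := repeat match goal with H : is_true (_ != _) |- _ => rewrite ?(negbTE H); move: H end;
  intros; rewrite ?eqxx /=.

Lemma D_eq n (i j : 'I_n) (a : R) : i != j ->
  ((1%:M + (-1) *: delta_mx j i) *m (1%:M + (t * a) *: delta_mx i j)) *m (1%:M + 1 *: delta_mx j i)
  = 1%:M + t *: (a *: (delta_mx i i + delta_mx i j - delta_mx j i - delta_mx j j)) :> 'M[R]_n.
Proof.
move=> ij; have ji : j != i by rewrite eq_sym.
do 4 rewrite ?mulmxDl ?mulmxDr ?mul1mx ?mulmx1 -?scalemxAl -?scalemxAr
  ?mul_delta_mx ?mul_delta_mx_0 // ?scaler0 ?addr0.
apply/matrixP => k l; rewrite !mxE.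
case: (k =P i) => [?|/eqP ki]; [|case: (k =P j) => [?|/eqP kj]];
case: (l =P i) => [?|/eqP li]; try (case: (l =P j) => [?|/eqP lj]);
  subst; simp; ring.
Qed.


Lemma S_diag n (i j : 'I_n) (a : R) : i != j -> S (a *: (delta_mx i i - delta_mx j j)).
Proof.
move=> ij; have ji : j != i by rewrite eq_sym.
have SD : S (a *: (delta_mx i i + delta_mx i j - delta_mx j i - delta_mx j j)).
  exists ((1%:M + (-1) *: delta_mx j i) *m (1%:M + (t * a) *: delta_mx i j) *m (1%:M + 1 *: delta_mx j i)).
    split; last by move=> k l; exists ((a *: (delta_mx i i + delta_mx i j - delta_mx j i - delta_mx j j)) k l); rewrite D_eq // addrC addKr mxE.
    by rewrite !det_mulmx !det_elem // !mulr1.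
  by rewrite D_eq //; apply: phiE.
have := S_add (S_add SD (S_elem a ji)) (S_elem (- a) ij).
suff -> : a *: (delta_mx i i + delta_mx i j - delta_mx j i - delta_mx j j) + a *: delta_mx j i + (- a) *: delta_mx i j = a *: (delta_mx i i - delta_mx j j) :> 'M[R]_n by [].
apply/matrixP => k l; rewrite !mxE.
case: (k =P i) => [?|/eqP ki]; [|case: (k =P j) => [?|/eqP kj]];
case: (l =P i) => [?|/eqP li]; try (case: (l =P j) => [?|/eqP lj]);
  subst; simp; ring.
Qed.

Lemma S_sum n (I : finType) (F : I -> 'M[R]_n) : (forall i, S (F i)) -> S (\sum_i F i).
Proof.
move=> h; apply: (big_ind (@S n)) => //; [exact: S_zero (redM0 n)| exact: S_add].
Qed.

Lemma S_all n (j0 : 'I_n) (Y : 'M[R]_n) : \tr Y \in @pmult R p -> S Y.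
Proof.
move=> htr.
pose G i j := if i == j then Y i i *: (delta_mx i i - delta_mx j0 j0) else Y i j *: delta_mx i j.
have eY : Y = \sum_i \sum_j G i j + \tr Y *: delta_mx j0 j0.
  have e1 : forall i, \sum_j G i j = \sum_j Y i j *: delta_mx i j - Y i i *: delta_mx j0 j0.
    move=> i; rewrite (bigD1 i) //= [in RHS](bigD1 i) //= /G eqxx.
    under eq_bigr => j ji do rewrite eq_sym (negbTE ji).
    by rewrite scalerBr addrAC.
  under eq_bigr do rewrite e1.
  rewrite sumrB -matrix_sum_delta /mxtrace scaler_suml.
  by rewrite subrK.
rewrite eY; apply: S_add.
  apply: S_sum => i; apply: S_sum => j; rewrite /G.
  case: (i =P j) => [_|/eqP ij]; last exact: S_elem.
  case: (i =P j0) => [->|/eqP ij0]; last exact: S_diag.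
  by apply: S_zero; rewrite subrr scaler0 redM0.
apply: S_zero; apply/matrixP => k l; rewrite !mxE; apply/redp0E.
move/asboolP: htr => [c ->]; apply/asboolP; exists (c * ((k == j0) && (l == j0))%:R).
by rewrite mulrA.
Qed.

End Main.

Theorem theorem3p2 (R : comPzRingType) (V : eqType) (b : V -> R)
    (hb : Zbasis b) (p n r : nat) (hp : prime p) (hn : (2 <= n)%N)
    (hr : (1 <= r)%N) :
  exists phi : 'M[R]_n -> 'M[Fp_of R p]_n,
    [/\ (forall A, Gamma p r A -> is_sl (phi A)),
        (forall A B, Gamma p r A -> Gamma p r B -> phi (A *m B) = phi A + phi B),
        (forall X, is_sl X -> exists2 A, Gamma p r A & phi A = X) &
        (forall A, Gamma p r A -> (phi A = 0 <-> Gamma p r.+1 A))].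
Proof.
exists (phi p r (n:=n)); split.
- by move=> A hA; apply: (phi_sl hb hp hr).
- by move=> A B hA hB; apply: (phiM hb hp hr).
- move=> X hX.
  case: n hn X hX => // n' _ X hX.
  pose Y : 'M[R]_n'.+1 := \matrix_(k, l) generic_quotient.repr (X k l).
  have eY : redM p Y = X by apply/matrixP => k l; rewrite !mxE /redp reprK.
  have htr : \tr Y \in @pmult R p.
    apply/redp0E; rewrite /mxtrace redp_sum -[RHS]hX.
    by apply: eq_bigr => i _; rewrite mxE /redp reprK.
  have [A hA eA] := S_all hb hp hr ord0 htr.
  by exists A; rewrite // eA eY.
- by move=> A hA; apply: (phi_ker hb hp).
Qed.
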